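(* Consider unknown functions $\theta_1,\theta_2,\theta_3,\theta_4,\theta_1'$ of $(z,\tau)$ and unknown coefficient functions $\vartheta_2,\vartheta_3,\vartheta_4,\eta$ of $\tau$ alone, subject to the system (S$_z$) and (S$_\tau$) given in the context. This system is compatible (i.e. the mixed derivatives $\partial_\tau\partial_z$ and $\partial_z\partial_\tau$ of each of the five unknowns, computed via the system, agree) if and only if the coefficients satisfy $$\frac{d\vartheta_2}{d\tau}=\frac{i}{\pi}\Big\{\eta+\frac{\pi^2}{12}(\vartheta_3^4+\vartheta_4^4)\Big\}\vartheta_2,\quad \frac{d\vartheta_3}{d\tau}=\frac{i}{\pi}\Big\{\eta+\frac{\pi^2}{12}(\vartheta_3^4+\vartheta_4^4-3\mathbf{B}^4\vartheta_4^4)\Big\}\vartheta_3,$$ $$\frac{d\vartheta_4}{d\tau}=\frac{i}{\pi}\Big\{\eta+\frac{\pi^2}{12}(\vartheta_3^4+\vartheta_4^4-3\mathbf{A}^4\vartheta_3^4)\Big\}\vartheta_4,\quad \frac{d\eta}{d\tau}=\frac{i}{\pi}2\eta^2-\frac{\pi^3}{72}i\big\{\vartheta_3^8+(9\mathbf{A}^4\mathbf{B}^4-6\mathbf{A}^4-6\mathbf{B}^4+2)\vartheta_3^4\vartheta_4^4+\vartheta_4^8\big\},$$ where $\mathbf{A}^4,\mathbf{B}^4$ are defined by $\mathbf{A}^4\vartheta_3^2\theta_1^2=\vartheta_2^2\theta_4^2-\vartheta_4^2\theta_2^2$ and $\mathbf{B}^4\vartheta_4^2\theta_1^2=\vartheta_2^2\theta_3^2-\vartheta_3^2\theta_2^2$,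 and these are algebraic first integrals of the system: on its solutions $\partial_z\mathbf{A}=\partial_z\mathbf{B}=\partial_\tau\mathbf{A}=\partial_\tau\mathbf{B}=0$. The three functions $(\vartheta_3,\vartheta_4,\eta)$ are differentially closed under these equations.
   Context: Let $\Lambda_0=\eta+\frac{\pi^2}{12}(\vartheta_3^4+\vartheta_4^4)$. System (S$_z$): $\partial_z\theta_1=\theta_1'$; $\partial_z\theta_2=\frac{\theta_1'}{\theta_1}\theta_2-\pi\vartheta_2^2\frac{\theta_3\theta_4}{\theta_1}$; $\partial_z\theta_3=\frac{\theta_1'}{\theta_1}\theta_3-\pi\vartheta_3^2\frac{\theta_2\theta_4}{\theta_1}$; $\partial_z\theta_4=\frac{\theta_1'}{\theta_1}\theta_4-\pi\vartheta_4^2\frac{\theta_2\theta_3}{\theta_1}$; $\partial_z\theta_1'=\frac{\theta_1'^2}{\theta_1}-\pi^2\vartheta_3^2\vartheta_4^2\frac{\theta_2^2}{\theta_1}-4\Lambda_0\theta_1$. System (S$_\tau$): $\partial_\tau\theta_1=\frac{-i}{4\pi}\frac{\theta_1'^2}{\theta_1}+\frac{i\pi}{4}\vartheta_3^2\vartheta_4^2\frac{\theta_2^2}{\theta_1}+\frac i\pi\Lambda_0\theta_1$; $\partial_\tau\theta_2=\frac{-i}{4\pi}\frac{\theta_1'^2}{\theta_1^2}\theta_2+\frac i2\vartheta_2^2\theta_1'\frac{\theta_3\theta_4}{\theta_1^2}+\frac{i\pi}{4}(\vartheta_3^2\vartheta_4^2\theta_2^2-\vartheta_2^2\vartheta_4^2\theta_3^2-\vartheta_2^2\vartheta_3^2\theta_4^2)\frac{\theta_2}{\theta_1^2}+\frac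 i\pi\Lambda_0\theta_2$; $\partial_\tau\theta_3=\frac{-i}{4\pi}\frac{\theta_1'^2}{\theta_1^2}\theta_3+\frac i2\vartheta_3^2\theta_1'\frac{\theta_2\theta_4}{\theta_1^2}-\frac{i\pi}{4}\vartheta_2^2\vartheta_3^2\frac{\theta_4^2}{\theta_1^2}\theta_3+\frac i\pi\Lambda_0\theta_3$; $\partial_\tau\theta_4=\frac{-i}{4\pi}\frac{\theta_1'^2}{\theta_1^2}\theta_4+\frac i2\vartheta_4^2\theta_1'\frac{\theta_2\theta_3}{\theta_1^2}-\frac{i\pi}{4}\vartheta_2^2\vartheta_4^2\frac{\theta_3^2}{\theta_1^2}\theta_4+\frac i\pi\Lambda_0\theta_4$; $\partial_\tau\theta_1'=\frac{-i}{4\pi}\frac{\theta_1'^3}{\theta_1^2}+\frac{3i}{\pi}\{\frac{\pi^2}{4}\vartheta_3^2\vartheta_4^2\frac{\theta_2^2}{\theta_1^2}+\Lambda_0\}\theta_1'-\frac i2\pi^2\vartheta_2^2\vartheta_3^2\vartheta_4^2\frac{\theta_2\theta_3\theta_4}{\theta_1^2}$. *)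

(* Defs.v *)
From Stdlib Require Import Reals.
From Coquelicot Require Import Coquelicot.
Open Scope C_scope.

(* A point of the (extended) phase space: values of the five unknowns
   theta_1, theta_2, theta_3, theta_4, theta_1' and of the four
   coefficients vartheta_2, vartheta_3, vartheta_4, eta. *)
Record St : Type := mkSt {
  th1 : C; th2 : C; th3 : C; th4 : C; th1p : C;
  vt2 : C; vt3 : C; vt4 : C; eta : C }.

Definition piC : C := RtoC PI.

Definition shift (p X : St) (s : C) : St :=
  mkSt (th1 p + s * th1 X) (th2 p + s * th2 X) (th3 p + s * th3 X)
       (th4 p + s * th4 X) (th1p p + s * th1p X)
       (vt2 p + s * vt2 X) (vt3 p + s * vt3 X) (vt4 p + s * vt4 X)
       (eta p + s * eta X).

(* Derivative of F along the vector X at p (chain rule / total derivative):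
   [c] is the complex derivative at s = 0 of s |-> F (p + s X). *)
Definition DerAlong (F : St -> C) (p X : St) (c : C) : Prop :=
  @is_derive C_AbsRing C_NormedModule (fun s : C => F (shift p X s)) (RtoC 0) c.

Definition Lam0 (p : St) : C :=
  eta p + piC ^ 2 / 12 * (vt3 p ^ 4 + vt4 p ^ 4).

Definition Fz1 (p : St) : C := th1p p.
Definition Fz2 (p : St) : C :=
  th1p p / th1 p * th2 p - piC * vt2 p ^ 2 * (th3 p * th4 p / th1 p).
Definition Fz3 (p : St) : C :=
  th1p p / th1 p * th3 p - piC * vt3 p ^ 2 * (th2 p * th4 p / th1 p).
Definition Fz4 (p : St) : C :=
  th1p p / th1 p * th4 p - piC * vt4 p ^ 2 * (th2 p * th3 p / th1 p).
Definition Fz5 (p : St) : C :=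
  th1p p ^ 2 / th1 p - piC ^ 2 * vt3 p ^ 2 * vt4 p ^ 2 * (th2 p ^ 2 / th1 p)
  - 4 * Lam0 p * th1 p.

Definition Ft1 (p : St) : C :=
  - Ci / (4 * piC) * (th1p p ^ 2 / th1 p)
  + Ci * piC / 4 * vt3 p ^ 2 * vt4 p ^ 2 * (th2 p ^ 2 / th1 p)
  + Ci / piC * Lam0 p * th1 p.
Definition Ft2 (p : St) : C :=
  - Ci / (4 * piC) * (th1p p ^ 2 / th1 p ^ 2) * th2 p
  + Ci / 2 * vt2 p ^ 2 * th1p p * (th3 p * th4 p / th1 p ^ 2)
  + Ci * piC / 4 * (vt3 p ^ 2 * vt4 p ^ 2 * th2 p ^ 2
                    - vt2 p ^ 2 * vt4 p ^ 2 * th3 p ^ 2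
                    - vt2 p ^ 2 * vt3 p ^ 2 * th4 p ^ 2) * (th2 p / th1 p ^ 2)
  + Ci / piC * Lam0 p * th2 p.
Definition Ft3 (p : St) : C :=
  - Ci / (4 * piC) * (th1p p ^ 2 / th1 p ^ 2) * th3 p
  + Ci / 2 * vt3 p ^ 2 * th1p p * (th2 p * th4 p / th1 p ^ 2)
  - Ci * piC / 4 * vt2 p ^ 2 * vt3 p ^ 2 * (th4 p ^ 2 / th1 p ^ 2) * th3 p
  + Ci / piC * Lam0 p * th3 p.
Definition Ft4 (p : St) : C :=
  - Ci / (4 * piC) * (th1p p ^ 2 / th1 p ^ 2) * th4 p
  + Ci / 2 * vt4 p ^ 2 * th1p p * (th2 p * th3 p / th1 p ^ 2)
  - Ci * piC / 4 * vt2 p ^ 2 * vt4 p ^ 2 * (th3 p ^ 2 / th1 p ^ 2) * th4 p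
  + Ci / piC * Lam0 p * th4 p.
Definition Ft5 (p : St) : C :=
  - Ci / (4 * piC) * (th1p p ^ 3 / th1 p ^ 2)
  + 3 * Ci / piC * (piC ^ 2 / 4 * vt3 p ^ 2 * vt4 p ^ 2 * (th2 p ^ 2 / th1 p ^ 2)
                    + Lam0 p) * th1p p
  - Ci / 2 * piC ^ 2 * vt2 p ^ 2 * vt3 p ^ 2 * vt4 p ^ 2
      * (th2 p * th3 p * th4 p / th1 p ^ 2).

(* The z-flow: coefficients do not depend on z. *)
Definition Xz (p : St) : St :=
  mkSt (Fz1 p) (Fz2 p) (Fz3 p) (Fz4 p) (Fz5 p) 0 0 0 0.

(* The tau-flow, where d2 d3 d4 de are the (a priori unknown) values of
   d vartheta_2/d tau, d vartheta_3/d tau, d vartheta_4/d tau, d eta/d tau. *)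
Definition Xt (d2 d3 d4 de : C) (p : St) : St :=
  mkSt (Ft1 p) (Ft2 p) (Ft3 p) (Ft4 p) (Ft5 p) d2 d3 d4 de.

(* Compatibility: for each of the five unknowns, the mixed derivative
   d_tau (d_z u) (= derivative of the (S_z) right-hand side along the tau-flow)
   and d_z (d_tau u) (= derivative of the (S_tau) right-hand side along the
   z-flow) exist and agree. *)
Definition Compatible (d2 d3 d4 de : C) (p : St) : Prop :=
  (exists c, DerAlong Fz1 p (Xt d2 d3 d4 de p) c /\ DerAlong Ft1 p (Xz p) c) /\
  (exists c, DerAlong Fz2 p (Xt d2 d3 d4 de p) c /\ DerAlong Ft2 p (Xz p) c) /\
  (exists c, DerAlong Fz3 p (Xt d2 d3 d4 de p) c /\ DerAlong Ft3 p (Xz p) c) /\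
  (exists c, DerAlong Fz4 p (Xt d2 d3 d4 de p) c /\ DerAlong Ft4 p (Xz p) c) /\
  (exists c, DerAlong Fz5 p (Xt d2 d3 d4 de p) c /\ DerAlong Ft5 p (Xz p) c).

Definition A4 (p : St) : C :=
  (vt2 p ^ 2 * th4 p ^ 2 - vt4 p ^ 2 * th2 p ^ 2) / (vt3 p ^ 2 * th1 p ^ 2).
Definition B4 (p : St) : C :=
  (vt2 p ^ 2 * th3 p ^ 2 - vt3 p ^ 2 * th2 p ^ 2) / (vt4 p ^ 2 * th1 p ^ 2).

Definition dvt2 (p : St) : C :=
  Ci / piC * (eta p + piC ^ 2 / 12 * (vt3 p ^ 4 + vt4 p ^ 4)) * vt2 p.
Definition dvt3 (p : St) : C :=
  Ci / piC * (eta p + piC ^ 2 / 12 * (vt3 p ^ 4 + vt4 p ^ 4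
                                       - 3 * B4 p * vt4 p ^ 4)) * vt3 p.
Definition dvt4 (p : St) : C :=
  Ci / piC * (eta p + piC ^ 2 / 12 * (vt3 p ^ 4 + vt4 p ^ 4
                                       - 3 * A4 p * vt3 p ^ 4)) * vt4 p.
Definition deta (p : St) : C :=
  Ci / piC * 2 * eta p ^ 2
  - piC ^ 3 / 72 * Ci
    * (vt3 p ^ 8
       + (9 * A4 p * B4 p - 6 * A4 p - 6 * B4 p + 2) * vt3 p ^ 4 * vt4 p ^ 4
       + vt4 p ^ 8).

(* Main.v *)
Require Import Defs.
From Stdlib Require Import Reals Lra.
From Coquelicot Require Import Coquelicot.
Open Scope C_scope.
Lemma is_derive_Cinv (w : C) : w <> 0 ->
  @is_derive C_AbsRing C_NormedModule (fun y : C => / y) w (- / (w * w)).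
Proof.
  intros Hw. split. apply is_linear_scal_l.
  intros x Hx. apply (@is_filter_lim_locally_unique C_AbsRing (AbsRing_NormedModule C_AbsRing)) in Hx. subst x.
  intros eps. apply (@locally_norm_le_locally C_AbsRing (AbsRing_NormedModule C_AbsRing)).
  assert (Hm : (0 < Cmod w)%R) by (apply Cmod_gt_0; auto).
  assert (Hd : (0 < Rmin (Cmod w / 2) (eps * (Cmod w ^ 3) / 2))%R).
  { apply Rmin_pos. lra. apply Rmult_lt_0_compat; [|lra].
    apply Rmult_lt_0_compat. apply cond_pos. apply pow_lt; auto. }
  exists (mkposreal _ Hd). intros y Hy. change C in y.
  change (Cmod (y - w) < Rmin (Cmod w / 2) (eps * Cmod w ^ 3 / 2))%R in Hy.
  change (Cmod ((/ y - / w) - (y - w) * (- / (w * w))) <= eps * Cmod (y - w))%R.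
  assert (H1 : (Cmod (y - w) < Cmod w / 2)%R).
  { eapply Rlt_le_trans. apply Hy. apply Rmin_l. }
  assert (H2 : (Cmod (y - w) < eps * Cmod w ^ 3 / 2)%R).
  { eapply Rlt_le_trans. apply Hy. apply Rmin_r. }
  assert (Hyw : (Cmod w / 2 < Cmod y)%R).
  { assert (Cmod w <= Cmod y + Cmod (w - y))%R.
    { replace w with (y + (w - y)) at 1 by ring. apply Cmod_triangle. }
    replace (w - y) with (- (y - w)) in H by ring. rewrite Cmod_opp in H. lra. }
  assert (Hy0 : y <> 0).
  { intro E. subst y. rewrite Cmod_0 in Hyw. lra. }
  replace ((/ y - / w) - (y - w) * (- / (w * w))) with ((y - w) * ((y - w) / (y * w * w))).
  2: { field. split; auto. }
  rewrite Cmod_mult, Cmod_div, !Cmod_mult.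
  2: { repeat apply Cmult_neq_0; auto. }
  rewrite Rmult_comm. apply Rmult_le_compat_r. apply Cmod_ge_0.
  apply Rle_div_l. apply Rmult_lt_0_compat. apply Rmult_lt_0_compat; lra. lra.
  apply Rle_trans with (eps * Cmod w ^ 3 / 2)%R. lra.
  assert (0 < eps)%R by apply cond_pos.
  replace (Cmod y * Cmod w * Cmod w)%R with (Cmod w ^ 2 * Cmod y)%R by ring.
  assert (0 < Cmod w ^ 2)%R by (apply pow_lt; auto).
  replace (eps * Cmod w ^ 3 / 2)%R with (eps * (Cmod w ^ 2 * (Cmod w / 2)))%R by (simpl; field).
  apply Rmult_le_compat_l. lra. apply Rmult_le_compat_l; lra.
Qed.

Notation DC f c := (@is_derive C_AbsRing C_NormedModule f (RtoC 0) c).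

Lemma dC_eq (f : C -> C) (c1 c2 : C) : DC f c1 -> c1 = c2 -> DC f c2.
Proof. intros H ->; exact H. Qed.

Lemma dC_uniq (f : C -> C) (c1 c2 : C) : DC f c1 -> DC f c2 -> c1 = c2.
Proof. intros H1 H2. apply is_C_derive_unique in H1. apply is_C_derive_unique in H2. congruence. Qed.

Lemma convA (f : C -> C) x l : @is_derive C_AbsRing (AbsRing_NormedModule C_AbsRing) f x l -> @is_derive C_AbsRing C_NormedModule f x l.
Proof. intros [_ H]. split. apply is_linear_scal_l. exact H. Qed.
Lemma convB (f : C -> C) x l : @is_derive C_AbsRing C_NormedModule f x l -> @is_derive C_AbsRing (AbsRing_NormedModule C_AbsRing) f x l.
Proof. intros [_ H]. split. apply is_linear_scal_l. exact H. Qed.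

Lemma dC_const (a : C) : DC (fun _ => a) (RtoC 0).
Proof. exact (@is_derive_const C_AbsRing C_NormedModule a (RtoC 0)). Qed.

Lemma dC_id : DC (fun s => s) (RtoC 1).
Proof. eapply dC_eq. apply convA. exact (@is_derive_id C_AbsRing (RtoC 0)). compute. reflexivity. Qed.

Lemma dC_plus (f g : C -> C) (a b : C) : DC f a -> DC g b -> DC (fun s => f s + g s) (a + b).
Proof. intros. exact (@is_derive_plus C_AbsRing C_NormedModule f g (RtoC 0) a b H H0). Qed.

Lemma dC_opp (f : C -> C) (a : C) : DC f a -> DC (fun s => - f s) (- a).
Proof. intros. exact (@is_derive_opp C_AbsRing C_NormedModule f (RtoC 0) a H). Qed.

Lemma dC_minus (f g : C -> C) (a b : C) : DC f a -> DC g b -> DC (fun s => f s - g s) (a - b).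
Proof. intros. apply dC_plus; auto. apply dC_opp; auto. Qed.

Lemma dC_mult (f g : C -> C) (a b : C) : DC f a -> DC g b -> DC (fun s => f s * g s) (a * g (RtoC 0) + f (RtoC 0) * b).
Proof. intros. apply convA. exact (@is_derive_mult C_AbsRing f g (RtoC 0) a b (convB _ _ _ H) (convB _ _ _ H0) Cmult_comm). Qed.

Lemma dC_inv (f : C -> C) (a : C) : f (RtoC 0) <> 0 -> DC f a -> DC (fun s => / f s) (a * (- / (f (RtoC 0) * f (RtoC 0)))).
Proof. intros Hf H. exact (@is_derive_comp C_AbsRing C_NormedModule (fun y => / y) f (RtoC 0) _ a
   (is_derive_Cinv (f (RtoC 0)) Hf) (convB _ _ _ H)). Qed.

Lemma dC_div (f g : C -> C) (a b : C) : g (RtoC 0) <> 0 -> DC f a -> DC g b ->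
  DC (fun s => f s / g s) (a * / g (RtoC 0) + f (RtoC 0) * (b * (- / (g (RtoC 0) * g (RtoC 0))))).
Proof. intros. apply (dC_mult f (fun s => / g s)); auto. apply dC_inv; auto. Qed.

Lemma dC_pow (f : C -> C) (a : C) n : DC f a -> DC (fun s => f s ^ n) (INR n * a * f (RtoC 0) ^ (pred n)).
Proof.
  intros H. induction n as [|n IH].
  - eapply dC_eq. apply (dC_const 1). simpl. ring.
  - eapply dC_eq. apply (dC_mult f (fun s => f s ^ n)). exact H. exact IH.
    rewrite S_INR, RtoC_plus. destruct n.
    + simpl. ring.
    + rewrite S_INR, RtoC_plus. simpl. ring.
Qed.

Lemma Cpow_nz (x : C) n : x <> 0 -> x ^ n <> 0.
Proof. intros H. induction n; simpl. intro E. injection E. lra. apply Cmult_neq_0; auto. Qed.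

Ltac nz := cbv beta; rewrite ?Cmult_0_l, ?Cplus_0_r;
  repeat first [ apply Cpow_nz | apply Cmult_neq_0 ]; assumption.

Ltac dconst := lazymatch goal with |- DC ?f _ =>
  lazymatch f with (fun s => ?a) => let T := type of a in apply (dC_const a) end end.
Ltac dtac := first [ dconst | dstep ]
with dstep := lazymatch goal with
| |- DC (fun s => s) _ => apply dC_id
| |- DC (fun s => Cplus (@?f s) (@?g s)) _ => apply (dC_plus f g); [dtac|dtac]
| |- DC (fun s => Cminus (@?f s) (@?g s)) _ => apply (dC_minus f g); [dtac|dtac]
| |- DC (fun s => Cmult (@?f s) (@?g s)) _ => apply (dC_mult f g); [dtac|dtac]
| |- DC (fun s => Copp (@?f s)) _ => apply (dC_opp f); dtac
| |- DC (fun s => Cdiv (@?f s) (@?g s)) _ => apply (dC_div f g); [nz|dtac|dtac]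
| |- DC (fun s => Cinv (@?f s)) _ => apply (dC_inv f); [nz|dtac]
| |- DC (fun s => Cpow (@?f s) ?n) _ => eapply (dC_pow f _ n); dtac
end.

Lemma piC_nz : piC <> 0.
Proof. unfold piC. intro E. injection E. pose proof PI_RGT_0. lra. Qed.

Lemma C2_nz : (2 : C) <> 0.
Proof. intro E. injection E. lra. Qed.
Lemma C4_nz : (4 : C) <> 0.
Proof. intro E. injection E. lra. Qed.

Lemma lin_solve (a x y : C) : a <> 0 -> a * (x - y) = 0 -> x = y.
Proof.
  intros Ha E. assert (x - y = 0).
  { replace (x - y) with (/ a * (a * (x - y))) by (field; auto). rewrite E. ring. }
  replace x with ((x - y) + y) by ring. rewrite H. ring.
Qed.

Ltac prep F := unfold DerAlong; unfold F, Lam0, shift, Xt, Xz;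
  cbn [th1 th2 th3 th4 th1p vt2 vt3 vt4 eta].

Ltac fin := cbv beta; rewrite ?Cmult_0_l, ?Cplus_0_r;
  unfold Fz1, Fz2, Fz3, Fz4, Fz5, Ft1, Ft2, Ft3, Ft4, Ft5, dvt2, dvt3, dvt4, deta, A4, B4, Lam0;
  rewrite ?INR_IZR_INZ; cbn [Z.of_nat Pos.of_succ_nat Pos.succ Cpow pred];
  field; repeat split; auto.

Theorem theorem7p1 :
  forall p : St,
    th1 p <> 0 -> vt3 p <> 0 -> vt4 p <> 0 ->
    (forall d2 d3 d4 de : C,
        (d2 = dvt2 p /\ d3 = dvt3 p /\ d4 = dvt4 p /\ de = deta p ->
         Compatible d2 d3 d4 de p) /\
        (th2 p <> 0 -> th3 p <> 0 -> th4 p <> 0 -> vt2 p <> 0 ->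
         Compatible d2 d3 d4 de p ->
         d2 = dvt2 p /\ d3 = dvt3 p /\ d4 = dvt4 p /\ de = deta p)) /\
    DerAlong A4 p (Xz p) 0 /\ DerAlong B4 p (Xz p) 0 /\
    DerAlong A4 p (Xt (dvt2 p) (dvt3 p) (dvt4 p) (deta p) p) 0 /\
    DerAlong B4 p (Xt (dvt2 p) (dvt3 p) (dvt4 p) (deta p) p) 0.
Proof.
  intros p H1 H3 H4. pose proof piC_nz as Hpi.
  split; [| split; [| split; [| split]]].
  2: { prep A4. eapply dC_eq. dtac. fin. }
  2: { prep B4. eapply dC_eq. dtac. fin. }
  2: { prep A4. eapply dC_eq. dtac. fin. }
  2: { prep B4. eapply dC_eq. dtac. fin. }
  intros d2 d3 d4 de. split.
  - intros [-> [-> [-> ->]]]. unfold Compatible.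
    split; [| split; [| split; [| split]]].
    + eexists; split; [| prep Ft1; dtac]. prep Fz1. eapply dC_eq. dtac. fin.
    + eexists; split; [| prep Ft2; dtac]. prep Fz2. eapply dC_eq. dtac. fin.
    + eexists; split; [| prep Ft3; dtac]. prep Fz3. eapply dC_eq. dtac. fin.
    + eexists; split; [| prep Ft4; dtac]. prep Fz4. eapply dC_eq. dtac. fin.
    + eexists; split; [| prep Ft5; dtac]. prep Fz5. eapply dC_eq. dtac. fin.
  - intros H2 H3' H4' Hv2 [[c1 [A1 B1]] [[c2 [A2 B2]] [[c3 [A3 B3]] [[c4 [A4' B4']] [c5 [A5 B5]]]]]].
    assert (E2 : d2 = dvt2 p).
    { eassert (K1 : DerAlong Fz2 p (Xt d2 d3 d4 de p) _) by (prep Fz2; dtac).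
      eassert (K2 : DerAlong Ft2 p (Xz p) _) by (prep Ft2; dtac).
      pose proof (dC_uniq _ _ _ A2 K1) as U1. pose proof (dC_uniq _ _ _ B2 K2) as U2.
      apply (lin_solve (2 * piC * vt2 p * th3 p * th4 p)).
      { repeat apply Cmult_neq_0; auto using C2_nz. }
      transitivity (th1 p * (c2 - c2)); [| ring].
      rewrite U2 at 1. rewrite U1. fin. }
    assert (E3 : d3 = dvt3 p).
    { eassert (K1 : DerAlong Fz3 p (Xt d2 d3 d4 de p) _) by (prep Fz3; dtac).
      eassert (K2 : DerAlong Ft3 p (Xz p) _) by (prep Ft3; dtac).
      pose proof (dC_uniq _ _ _ A3 K1) as U1. pose proof (dC_uniq _ _ _ B3 K2) as U2.
      apply (lin_solve (2 * piC * vt3 p * th2 p * th4 p)).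
      { repeat apply Cmult_neq_0; auto using C2_nz. }
      transitivity (th1 p * (c3 - c3)); [| ring].
      rewrite U2 at 1. rewrite U1. fin. }
    assert (E4 : d4 = dvt4 p).
    { eassert (K1 : DerAlong Fz4 p (Xt d2 d3 d4 de p) _) by (prep Fz4; dtac).
      eassert (K2 : DerAlong Ft4 p (Xz p) _) by (prep Ft4; dtac).
      pose proof (dC_uniq _ _ _ A4' K1) as U1. pose proof (dC_uniq _ _ _ B4' K2) as U2.
      apply (lin_solve (2 * piC * vt4 p * th2 p * th3 p)).
      { repeat apply Cmult_neq_0; auto using C2_nz. }
      transitivity (th1 p * (c4 - c4)); [| ring].
      rewrite U2 at 1. rewrite U1. fin. }
    subst d2 d3 d4. split; [reflexivity | split; [reflexivity | split; [reflexivity |]]].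
    { eassert (K1 : DerAlong Fz5 p (Xt (dvt2 p) (dvt3 p) (dvt4 p) de p) _) by (prep Fz5; dtac).
      eassert (K2 : DerAlong Ft5 p (Xz p) _) by (prep Ft5; dtac).
      pose proof (dC_uniq _ _ _ A5 K1) as U1. pose proof (dC_uniq _ _ _ B5 K2) as U2.
      apply (lin_solve (4 * th1 p)).
      { repeat apply Cmult_neq_0; auto using C4_nz. }
      transitivity (c5 - c5); [| ring].
      rewrite U2 at 1. rewrite U1. fin. }
Qed.
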